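(* Let $P=(p_1,\dots,p_n)$ be points in $\mathbb{R}^d$, $\mathcal{F}$ a constraint for $k$-CMedian, and $\mathcal{C}=\{c_1,\dots,c_k\}\subset\mathbb{R}^d$ with $\omega=\frac1n\sum_{i=1}^n\min_{c\in\mathcal{C}}\|p_i-c\|$. For each $i$ let $\tilde p_i$ be a point of $\mathcal{C}$ nearest to $p_i$, $\tilde P=(\tilde p_1,\dots,\tilde p_n)$, and $\tilde\mu_{opt}$ the optimal $k$-CMedian value of $\tilde P$. Let $\mu_{opt}([\mathcal{C}]^k)=\min_{(S_j)\in\mathcal{F}}\min_{(q_1,\dots,q_k)\in\mathcal{C}^k}\frac1n\sum_j\sum_{i\in S_j}\|p_i-q_j\|$. Then $\mu_{opt}([\mathcal{C}]^k)\le\omega+2\tilde\mu_{opt}$.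
   Context: A constraint for $k$-CMedian is a nonempty family $\mathcal{F}$ of ordered partitions $(S_1,\dots,S_k)$ of $\{1,\dots,n\}$ into $k$ parts. For a sequence $X=(x_1,\dots,x_n)$ its optimal $k$-CMedian value is $\min_{(S_j)\in\mathcal{F}}\min_{c'_1,\dots,c'_k\in\mathbb{R}^d}\frac1n\sum_j\sum_{i\in S_j}\|x_i-c'_j\|$. *)

(* Defs.v *)
From mathcomp Require Import all_boot all_order all_algebra.
From mathcomp Require Import boolp classical_sets reals.
Set Implicit Arguments. Unset Strict Implicit. Unset Printing Implicit Defensive.
Import Order.TTheory GRing.Theory Num.Theory.
Local Open Scope ring_scope.
Local Open Scope classical_set_scope.

Section Defs.
Variable R : realType.

Definition enorm (d : nat) (x : 'rV[R]_d) : R :=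
  Num.sqrt (\sum_(i < d) x ord0 i ^+ 2).

(* An ordered partition (S_1,...,S_k) of {1..n} is encoded by the assignment
   a : 'I_n -> 'I_k, with S_j = a^{-1}(j).  A constraint is a nonempty set of
   such assignments. *)

Definition cost (n k d : nat) (X : 'I_n -> 'rV[R]_d)
    (a : {ffun 'I_n -> 'I_k}) (c : 'I_k -> 'rV[R]_d) : R :=
  n%:R^-1 * \sum_(j < k) \sum_(i < n | a i == j) enorm (X i - c j).

Definition kcmedian_opt (n k d : nat) (F : {set {ffun 'I_n -> 'I_k}})
    (X : 'I_n -> 'rV[R]_d) : R :=
  inf [set v | exists a, a \in F /\ exists c : 'I_k -> 'rV[R]_d, v = cost X a c].

Definition restricted_opt (n k d : nat) (F : {set {ffun 'I_n -> 'I_k}})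
    (X : 'I_n -> 'rV[R]_d) (C : 'I_k -> 'rV[R]_d) : R :=
  inf [set v | exists a, a \in F /\ exists s : 'I_k -> 'I_k,
                 v = cost X a (fun j => C (s j))].

Definition omega (n k d : nat) (X : 'I_n -> 'rV[R]_d) (C : 'I_k -> 'rV[R]_d) : R :=
  n%:R^-1 * \sum_(i < n) inf [set enorm (X i - C j) | j in [set: 'I_k]].

End Defs.

(* Main.v *)
Require Import Defs.
From mathcomp Require Import all_boot all_order all_algebra.
From mathcomp Require Import boolp classical_sets reals.
From mathcomp Require Import lra ring.
Import Order.TTheory GRing.Theory Num.Theory.
Local Open Scope ring_scope.

Lemma cs_sq (R : realType) (d : nat) (x y : 'I_d -> R) :
  (\sum_i x i * y i) ^+ 2 <= (\sum_i x i ^+ 2) * (\sum_i y i ^+ 2).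
Proof.
have H : 0 <= \sum_i \sum_j (x i * y j - x j * y i) ^+ 2.
  by apply: sumr_ge0 => i _; apply: sumr_ge0 => j _; exact: sqr_ge0.
have E : \sum_i \sum_j (x i * y j - x j * y i) ^+ 2 =
   (\sum_i x i ^+ 2) * (\sum_i y i ^+ 2) + (\sum_i y i ^+ 2) * (\sum_i x i ^+ 2)
   - 2 * ((\sum_i x i * y i) * (\sum_i x i * y i)).
  rewrite !big_distrl /= mulr_sumr -big_split /= -sumrB.
  apply: eq_bigr => i _; rewrite !big_distrr /= -big_split /= -sumrB.
  by apply: eq_bigr => j _; ring.
rewrite E in H; rewrite expr2; lra.
Qed.

Lemma enorm_tri (R : realType) (d : nat) (u v : 'rV[R]_d) :
  enorm (u + v) <= enorm u + enorm v.
Proof.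
rewrite /enorm.
set A := \sum_i u ord0 i ^+ 2; set B := \sum_i v ord0 i ^+ 2.
set S := \sum_i u ord0 i * v ord0 i.
have A0 : 0 <= A by apply: sumr_ge0 => i _; exact: sqr_ge0.
have B0 : 0 <= B by apply: sumr_ge0 => i _; exact: sqr_ge0.
have ES : \sum_i (u + v) ord0 i ^+ 2 = A + B + 2 * S.
  rewrite /A /B /S mulr_sumr -!big_split /=; apply: eq_bigr => i _.
  rewrite mxE; ring.
have HS : S <= Num.sqrt A * Num.sqrt B.
  rewrite -sqrtrM // (le_trans (ler_norm S)) // -sqrtr_sqr.
  exact/ler_wsqrtr/cs_sq.
rewrite ES -(ger0_norm (addr_ge0 (sqrtr_ge0 A) (sqrtr_ge0 B))) -sqrtr_sqr.
apply: ler_wsqrtr.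
have hA := sqr_sqrtr A0; have hB := sqr_sqrtr B0.
rewrite sqrrD hA hB; lra.
Qed.

Lemma enormN (R : realType) (d : nat) (u : 'rV[R]_d) : enorm (- u) = enorm u.
Proof. by rewrite /enorm; congr Num.sqrt; apply: eq_bigr => i _; rewrite mxE sqrrN. Qed.

Lemma enorm_ge0 (R : realType) (d : nat) (u : 'rV[R]_d) : 0 <= enorm u.
Proof. exact: sqrtr_ge0. Qed.

Lemma enorm_tri3 (R : realType) (d : nat) (x y z : 'rV[R]_d) :
  enorm (x - z) <= enorm (x - y) + enorm (y - z).
Proof. by have := @enorm_tri _ _ (x - y) (y - z); rewrite addrA subrK. Qed.

Lemma enorm_sym (R : realType) (d : nat) (x y : 'rV[R]_d) :
  enorm (x - y) = enorm (y - x).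
Proof. by rewrite -enormN opprB. Qed.

Theorem lemma13 (R : realType) (n k d : nat)
  (F : {set {ffun 'I_n -> 'I_k}}) (HF : F != finset.set0)
  (P : 'I_n -> 'rV[R]_d) (C : 'I_k -> 'rV[R]_d)
  (near : 'I_n -> 'I_k)
  (Hnear : forall (i : 'I_n) (j : 'I_k),
      enorm (P i - C (near i)) <= enorm (P i - C j)) :
  restricted_opt F P C
    <= omega P C + 2 * kcmedian_opt F (fun i => C (near i)).
Proof.
set X := fun i => C (near i).
have Hom : omega P C = n%:R^-1 * \sum_i enorm (P i - C (near i)).
  rewrite /omega; congr (_ * _); apply: eq_bigr => i _.
  apply: le_anti; apply/andP; split.
  - apply: ge_inf; last by exists (near i).
    by exists (enorm (P i - C (near i))) => _ [j _ <-]; exact: Hnear.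
  - apply: lb_le_inf; first by exists (enorm (P i - C (near i))); exists (near i).
    by move=> _ [j _ <-]; exact: Hnear.
have key : forall a, a \in F -> forall c,
    restricted_opt F P C <= omega P C + 2 * cost X a c.
  move=> a aF c.
  pose s := fun j : 'I_k => Order.arg_min j xpredT (fun l => enorm (c j - C l)).
  have hs : forall j l, enorm (c j - C (s j)) <= enorm (c j - C l).
    move=> j l; rewrite /s; case: arg_minP => // m _ Hm; exact: Hm.
  apply: (@le_trans _ _ (cost P a (fun j => C (s j)))).
    apply: ge_inf; last by exists a; split => //; exists s.
    exists 0 => _ [b [_ [t ->]]]; rewrite /cost mulr_ge0 ?invr_ge0 //.
    by apply: sumr_ge0 => j _; apply: sumr_ge0 => i _; exact: enorm_ge0.
  rewrite Hom /cost (partition_big a xpredT) //= mulrCA -mulrDr.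
  apply: ler_wpM2l; first by rewrite invr_ge0.
  rewrite mulr_sumr -big_split /=; apply: ler_sum => j _.
  rewrite mulr_sumr -big_split /=; apply: ler_sum => i /eqP <-.
  have t1 := @enorm_tri3 _ _ (P i) (C (near i)) (C (s (a i))).
  have t2 := @enorm_tri3 _ _ (C (near i)) (c (a i)) (C (s (a i))).
  have t3 := hs (a i) (near i).
  rewrite [enorm (c (a i) - C (near i))]enorm_sym in t3.
  rewrite /X; lra.
suff : (restricted_opt F P C - omega P C) / 2 <= kcmedian_opt F X by lra.
apply: lb_le_inf.
  case/set0Pn: HF => a aF; exists (cost X a (fun _ => 0)).
  by exists a; split => //; exists (fun _ => 0).
move=> _ [a [aF [c ->]]]; have := key a aF c; lra.
Qed.
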